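(* Let $G$ be a connected graph of order $n$ and let $k\ge\chi(G)$ be an integer. Then $\overline{\mathrm{scs}}(G,k)=n$ if and only if $k>\chi(G)$, and likewise $\overline{\mathrm{lcs}}(G,k)=n$ if and only if $k>\chi(G)$.
   Context: All graphs are finite and simple. For a graph $G=(V,E)$ and an integer $k\ge\chi(G)$, a proper $k$-colouring is a map $c:V\to[k]$ with $c(u)\neq c(v)$ for every edge $uv$. A set $S\subseteq V$ is a determining set for $(G,c)$ if there is no proper $k$-colouring $c'\neq c$ of $G$ with $c'(s)=c(s)$ for all $s\in S$. A critical set for $(G,c)$ is an inclusion-minimal determining set. $\mathrm{scs}(G,c)$ and $\mathrm{lcs}(G,c)$ are the sizes of a smallest resp. largest critical set for $(G,c)$. $\overline{\mathrm{scs}}(G,k)$ and $\overline{\mathrm{lcs}}(G,k)$ are the maxima of $\mathrm{scs}(G,c)$ resp. $\mathrm{lcs}(G,c)$ over all proper $k$-colourings $c$ of $G$. *)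

(* Defs.v *)
From mathcomp Require Import all_boot.
Set Implicit Arguments. Unset Strict Implicit. Unset Printing Implicit Defensive.

(* A finite simple graph: vertex type T : finType, symmetric irreflexive
   adjacency relation e : rel T.  Colours are 'I_k (i.e. [k] shifted by one). *)

Section Colouring.
Variables (T : finType) (e : rel T).

Definition proper (k : nat) (c : {ffun T -> 'I_k}) : bool :=
  [forall x, forall y, e x y ==> (c x != c y)].

Definition colourable (k : nat) : bool :=
  [exists c : {ffun T -> 'I_k}, proper c].

(* chromatic number: least k admitting a proper k-colouring
   (for a simple graph, k = #|T| always works, so the minimum over
   k <= #|T| is the true chromatic number). *)
Definition chi : nat :=
  \big[minn/#|T|]_(k < #|T|.+1 | colourable k) (k : nat).

Definition determining (k : nat) (c : {ffun T -> 'I_k}) (S : {set T}) : bool :=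
  [forall c' : {ffun T -> 'I_k},
     (proper c' && [forall s in S, c' s == c s]) ==> (c' == c)].

Definition critical (k : nat) (c : {ffun T -> 'I_k}) (S : {set T}) : bool :=
  determining c S && [forall S' : {set T}, (S' \proper S) ==> ~~ determining c S'].

(* smallest / largest critical set sizes (critical sets always exist,
   since setT is determining, so the defaults are never used) *)
Definition scs (k : nat) (c : {ffun T -> 'I_k}) : nat :=
  \big[minn/#|T|]_(S : {set T} | critical c S) #|S|.

Definition lcs (k : nat) (c : {ffun T -> 'I_k}) : nat :=
  \max_(S : {set T} | critical c S) #|S|.

Definition scs_bar (k : nat) : nat :=
  \max_(c : {ffun T -> 'I_k} | proper c) scs c.

Definition lcs_bar (k : nat) : nat :=
  \max_(c : {ffun T -> 'I_k} | proper c) lcs c.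

End Colouring.

(* Main.v *)
Require Import Defs.
From mathcomp Require Import all_boot.

Lemma det_setT (T : finType) (e : rel T) k (c : {ffun T -> 'I_k}) :
  determining e c setT.
Proof.
apply/forallP => c'; apply/implyP => /andP[_ /forallP H].
apply/eqP/ffunP => x; move: (H x); rewrite in_setT => /eqP //.
Qed.

Lemma crit_exists (T : finType) (e : rel T) k (c : {ffun T -> 'I_k}) :
  exists S, critical e c S.
Proof.
case: (arg_minnP (fun S : {set T} => #|S|) (@det_setT T e k c)) => S dS Smin.
exists S; rewrite /critical dS /=; apply/forallP => S'; apply/implyP => pS.
apply/negP => dS'; have := Smin _ dS'; have := proper_card pS.
by move=> a b; move: (leq_trans a b); rewrite ltnn.
Qed.

Lemma scs_le (T : finType) (e : rel T) k (c : {ffun T -> 'I_k}) :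
  scs e c <= #|T|.
Proof.
rewrite /scs; apply: (big_ind (fun x => x <= #|T|)) => //.
  by move=> a b Ha Hb; rewrite geq_min Ha.
by move=> S _; apply: max_card.
Qed.

Lemma lcs_le (T : finType) (e : rel T) k (c : {ffun T -> 'I_k}) :
  lcs e c <= #|T|.
Proof.
rewrite /lcs; apply: (big_ind (fun x => x <= #|T|)) => //.
  by move=> a b Ha Hb; rewrite geq_max Ha.
by move=> S _; apply: max_card.
Qed.

Lemma bigmin_seq_le (I : eqType) (r : seq I) (P : pred I) (F : I -> nat) x0 i0 :
  i0 \in r -> P i0 -> \big[minn/x0]_(i <- r | P i) F i <= F i0.
Proof.
elim: r => // a r IH; rewrite in_cons big_cons => /orP[/eqP <- -> | H Pi].
  by rewrite geq_min leqnn.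
case: (P a); last exact: IH.
by rewrite geq_min IH // orbT.
Qed.

Lemma chi_le (T : finType) (e : rel T) j : colourable e j -> chi e <= j.
Proof.
move=> cj; rewrite /chi; case: (leqP j #|T|) => hj.
  exact: (@bigmin_seq_le _ _ _ (fun i : 'I_#|T|.+1 => (i : nat)) _ (Ordinal (hj : j < #|T|.+1)) (mem_index_enum _)).
apply: leq_trans (ltnW hj); apply: (big_ind (fun x => x <= #|T|)) => //.
  by move=> a b Ha Hb; rewrite geq_min Ha.
by move=> i _; rewrite -ltnS.
Qed.

Lemma colourable_n (T : finType) (e : rel T) (e_irr : irreflexive e) :
  colourable e #|T|.
Proof.
apply/existsP; exists [ffun x => enum_rank x].
apply/forallP => x; apply/forallP => y; apply/implyP => exy.
rewrite !ffunE; apply/negP => /eqP/enum_rank_inj exy'.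
by rewrite exy' e_irr in exy.
Qed.

Lemma colourable_chi (T : finType) (e : rel T) (e_irr : irreflexive e) :
  colourable e (chi e).
Proof.
rewrite /chi; apply: (big_ind (fun x => colourable e x)).
- exact: colourable_n.
- by move=> a b Ha Hb; rewrite /minn; case: ifP.
- by [].
Qed.

Definition freecol (T : finType) (e : rel T) k (c : {ffun T -> 'I_k}) (v : T) (a : 'I_k) :=
  (a != c v) && [forall u, e v u ==> (c u != a)].
Arguments freecol {T} e {k} c v a.
Arguments chi_le {T e j}.

Lemma critT_free (T : finType) (e : rel T) (e_irr : irreflexive e) k
  (c : {ffun T -> 'I_k}) : critical e c setT -> forall v, exists a, freecol e c v a.
Proof.
case/andP=> _ /forallP crit v.
have nd : ~~ determining e c (setT :\ v).
  by apply: (implyP (crit _)); apply: properD1; rewrite in_setT.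
case/forallPn: nd => c'; rewrite negb_imply => /andP[/andP[pc' /forallP agree] ne].
have agr : forall x, x != v -> c' x = c x.
  by move=> x xv; apply/eqP; apply: (implyP (agree x)); rewrite in_setD1 xv in_setT.
exists (c' v); apply/andP; split.
  apply/negP => /eqP eqv; apply: (negP ne); apply/eqP/ffunP => x.
  by case: (eqVneq x v) => [->//|xv]; apply: agr.
apply/forallP => u; apply/implyP => evu.
have uv : u != v by apply/eqP => uv; rewrite uv e_irr in evu.
rewrite -(agr u uv) eq_sym.
exact: (implyP (forallP (forallP pc' v) u) evu).
Qed.

Arguments critT_free {T e} e_irr {k c}.

Lemma critT_chi (T : finType) (e : rel T) (e_sym : symmetric e) (e_irr : irreflexive e)
  (x0 : T) k (c : {ffun T -> 'I_k}) :
  Defs.proper e c -> critical e c setT -> chi e < k.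
Proof.
move=> pc crit; have free := critT_free e_irr crit.
case: k c pc crit free => [|[|k]] c pc crit free.
- by case: (c x0).
- case: (free x0) => a /andP[na _]; by rewrite (ord1 a) (ord1 (c x0)) eqxx in na.
pose g v : 'I_k.+2 := if c v == ord_max then odflt (c v) [pick a | freecol e c v a] else c v.
have gP : forall v, c v == ord_max -> freecol e c v (g v).
  move=> v hv; rewrite /g hv; case: pickP => [a //|none].
  by case: (free v) => a; rewrite none.
have gmax : forall v, (g v : nat) < k.+1.
  move=> v; have : g v != ord_max.
    case hv: (c v == ord_max).
      by case/andP: (gP v hv) => ne _; rewrite (eqP hv) in ne.
    rewrite /g hv; by rewrite hv.
  by move=> ne; rewrite ltn_neqAle -ltnS ltn_ord andbT; exact: ne.
have gE : forall x y, e x y -> g x != g y.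
  move=> x y exy.
  have cxy : c x != c y := implyP (forallP (forallP pc x) y) exy.
  case hx: (c x == ord_max); case hy: (c y == ord_max).
  - by rewrite (eqP hx) (eqP hy) eqxx in cxy.
  - case/andP: (gP x hx) => _ /forallP /(_ y) /implyP /(_ exy).
    move=> H; have -> : g y = c y by apply: ifF; exact: hy.
    by rewrite eq_sym.
  - case/andP: (gP y hy) => _ /forallP /(_ x) /implyP; rewrite e_sym => /(_ exy).
    by move=> H; have -> : g x = c x by apply: ifF; exact: hx.
  - have -> : g x = c x by apply: ifF; exact: hx.
    by have -> : g y = c y by apply: ifF; exact: hy.
suff : colourable e k.+1 by move/chi_le.
apply/existsP; exists [ffun v => inord (g v)].
apply/forallP => x; apply/forallP => y; apply/implyP => exy; rewrite !ffunE.
apply/negP => /eqP/(congr1 (@nat_of_ord _)); rewrite !inordK ?gmax // => /ord_inj /eqP.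
by apply/negP; apply: gE.
Qed.

Lemma good_colouring (T : finType) (e : rel T) (e_irr : irreflexive e) k
  (hk : chi e < k) :
  exists c : {ffun T -> 'I_k}, Defs.proper e c /\ forall S, critical e c S = (S == setT).
Proof.
case/existsP: (@colourable_chi T e e_irr) => c0 pc0.
pose c : {ffun T -> 'I_k} := [ffun v => widen_ord (ltnW hk) (c0 v)].
pose z : 'I_k := Ordinal hk.
have pc : Defs.proper e c.
  apply/forallP => x; apply/forallP => y; apply/implyP => exy; rewrite !ffunE.
  exact: (implyP (forallP (forallP pc0 x) y) exy).
have detT : forall S, determining e c S -> S = setT.
  move=> S dS; apply/eqP; apply/negPn/negP => nS.
  have [v vS] : exists v, v \notin S.
    case: (pickP [pred v | v \notin S]) => [v /= vS|none]; first by exists v.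
    by case/negP: nS; apply/eqP/setP => x; rewrite in_setT; move: (none x) => /= /negbFE.
  pose c' : {ffun T -> 'I_k} := [ffun x => if x == v then z else c x].
  have pc' : Defs.proper e c'.
    apply/forallP => x; apply/forallP => y; apply/implyP => exy; rewrite !ffunE.
    have cxy : c x != c y := implyP (forallP (forallP pc x) y) exy.
    case: (eqVneq x v) => [xv|xv]; case: (eqVneq y v) => [yv|yv] //.
    - by rewrite xv yv e_irr in exy.
    - apply/negP => /eqP/(congr1 (@nat_of_ord _)); move=> /= h.
      by have := ltn_ord (c0 y); rewrite -h ltnn.
    - apply/negP => /eqP/(congr1 (@nat_of_ord _)); move=> /= h.
      by have := ltn_ord (c0 x); rewrite h ltnn.
    - by move: cxy; rewrite !ffunE.
  have := forallP dS c'; rewrite pc' /=.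
  have -> : [forall s in S, c' s == c s].
    apply/forallP => s; apply/implyP => sS; rewrite ffunE.
    by case: (eqVneq s v) => [sv|//]; move: sS; rewrite sv (negbTE vS).
  move=> /implyP /(_ isT) /eqP /ffunP /(_ v); rewrite !ffunE eqxx.
  move/(congr1 (@nat_of_ord _)) => /= h.
  by have := ltn_ord (c0 v); rewrite -h ltnn.
exists c; split => // S; apply/idP/eqP.
  by case/andP => dS _; apply: detT.
move=> ->; rewrite /critical (@det_setT T e k c) /=; apply/forallP => S'; apply/implyP => pS.
apply/negP => /detT eS; by rewrite eS properxx in pS.
Qed.

Lemma bad_colouring (T : finType) (e : rel T) (e_sym : symmetric e) (e_irr : irreflexive e)
  (x0 : T) k (hk : ~ chi e < k) (c : {ffun T -> 'I_k}) :
  Defs.proper e c -> scs e c < #|T| /\ lcs e c < #|T|.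
Proof.
move=> pc.
have small : forall S, critical e c S -> #|S| < #|T|.
  move=> S cS; rewrite -cardsT; apply: proper_card; rewrite properT.
  apply/negP => /eqP eS; rewrite eS in cS; apply: hk.
  exact: (@critT_chi T e e_sym e_irr x0 k c pc cS).
have n0 : 0 < #|T| by apply/card_gt0P; exists x0.
split.
  case: (@crit_exists T e k c) => S0 cS0.
  apply: leq_ltn_trans (small _ cS0).
  exact: (@bigmin_seq_le _ _ (fun S => critical e c S) (fun S : {set T} => #|S|) _ S0 (mem_index_enum _) cS0).
rewrite /lcs; apply: (big_ind (fun x => x < #|T|)) => //.
by move=> a b Ha Hb; rewrite gtn_max Ha.
Qed.

Theorem theorem5 (T : finType) (e : rel T)
  (e_sym : symmetric e) (e_irr : irreflexive e)
  (G_conn : forall x y : T, connect e x y) (G_nonempty : 0 < #|T|)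
  (k : nat) (hk : chi e <= k) :
  (scs_bar e k = #|T| <-> chi e < k) /\ (lcs_bar e k = #|T| <-> chi e < k).
Proof.
case/card_gt0P: (G_nonempty) => x0 _.
have bar_le : scs_bar e k <= #|T| /\ lcs_bar e k <= #|T|.
  split.
    rewrite /scs_bar; apply: (big_ind (fun x => x <= #|T|)) => //.
      by move=> a b Ha Hb; rewrite geq_max Ha.
    by move=> c _; apply: scs_le.
  rewrite /lcs_bar; apply: (big_ind (fun x => x <= #|T|)) => //.
    by move=> a b Ha Hb; rewrite geq_max Ha.
  by move=> c _; apply: lcs_le.
case: (boolP (chi e < k)) => hlt.
  case: (@good_colouring T e e_irr k hlt) => c [pc crit].
  have eqb : forall S : {set T}, critical e c S = (S == setT) := crit.
  have hs : scs e c = #|T|.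
    rewrite /scs (eq_bigl (fun S => S == setT)) // big_pred1_eq_id cardsT.
    by rewrite minnn.
  have hl : lcs e c = #|T|.
    by rewrite /lcs (big_pred1 setT) ?cardsT.

  case: bar_le => b1 b2; split; split => // _; apply/eqP; rewrite eqn_leq ?b1 ?b2 /=.
    by rewrite -{1}hs /scs_bar; apply: leq_bigmax_cond.
  by rewrite -{1}hl /lcs_bar; apply: leq_bigmax_cond.
have hk' : ~ chi e < k by apply/negP.
have n0 : 0 < #|T| := G_nonempty.
have s1 : scs_bar e k < #|T|.
  rewrite /scs_bar; apply: (big_ind (fun x => x < #|T|)) => //.
    by move=> a b Ha Hb; rewrite gtn_max Ha.
  by move=> c pc; case: (@bad_colouring T e e_sym e_irr x0 k hk' c pc).
have s2 : lcs_bar e k < #|T|.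
  rewrite /lcs_bar; apply: (big_ind (fun x => x < #|T|)) => //.
    by move=> a b Ha Hb; rewrite gtn_max Ha.
  by move=> c pc; case: (@bad_colouring T e e_sym e_irr x0 k hk' c pc).
split; split => // h.
  by rewrite h ltnn in s1.
by rewrite h ltnn in s2.
Qed.
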